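(* Let $R$ be an integral domain which is degree-rigid. Then: (a) for every $n\ge 0$, $\Delta^0(R^{[n]})=R$, where $R^{[n]}$ is the polynomial ring in $n$ variables over $R$; (b) $R$ is strongly invariant.
   Context: A degree function on an integral domain $R$ is a map $\deg:R\to\mathbb{Z}\cup\{-\infty\}$ such that $\deg r=-\infty$ iff $r=0$, $\deg(rs)=\deg r+\deg s$, and $\deg(r+s)\le\max\{\deg r,\deg s\}$; it is non-negative if its values lie in $\mathbb{N}\cup\{-\infty\}$, and trivial if $\deg r=0$ for all nonzero $r$. For such a function let $\mathcal{F}_0=\{r\in R:\deg r\le 0\}$. The degree-neutral invariant $\Delta^0(R)$ is the intersection of the subrings $\mathcal{F}_0$ over all non-negative degree functions on $R$. $R$ is degree-rigid if $\Delta^0(R)=R$, i.e. every non-negative degree function on $R$ is trivial. $R$ is strongly invariant if: for any integer $n\ge 0$ and subring $S\subset R[x_1,\dots,x_n]\cong R^{[n]}$, if there exist $y_1,\dots,y_n\in R^{[n]}$ with $R[x_1,\dots,x_n]=S[y_1,\dots,y_n]$, then $R=S$. *)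

(* Defs.v *)
From HB Require Import structures.
From mathcomp Require Import all_boot all_order all_algebra.
Set Implicit Arguments. Unset Strict Implicit. Unset Printing Implicit Defensive.
Import Order.TTheory GRing.Theory Num.Theory.
Local Open Scope ring_scope.

(* R^{[n]} : polynomial ring in n variables over R, realised as the iterated
   univariate polynomial ring R[x_0][x_1]...[x_{n-1}]. *)
Fixpoint mpoly (R : idomainType) (n : nat) : idomainType :=
  match n with
  | 0 => R
  | n'.+1 => ({poly mpoly R n'} : idomainType)
  end.

Fixpoint mconst (R : idomainType) (n : nat) : R -> mpoly R n :=
  match n return R -> mpoly R n with
  | 0 => fun r => r
  | n'.+1 => fun r => (@mconst R n' r)%:P
  end.

(* Evaluation of p in A^{[n]} at the point (y 0, ..., y (n-1)); the variable
   x_i (i < n) is sent to y i. *)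
Fixpoint meval (A : idomainType) (n : nat) : mpoly A n -> (nat -> A) -> A :=
  match n return mpoly A n -> (nat -> A) -> A with
  | 0 => fun p _ => p
  | n'.+1 => fun p y => (map_poly (fun c => @meval A n' c y) p).[y n']
  end.

Fixpoint mcoef_in (A : idomainType) (S : A -> Prop) (n : nat) : mpoly A n -> Prop :=
  match n return mpoly A n -> Prop with
  | 0 => fun p => S p
  | n'.+1 => fun p => forall i : nat, @mcoef_in A S n' p`_i
  end.

(* Degree function.  deg 0 = -oo is encoded by only constraining deg on
   nonzero elements (the value at 0 is irrelevant). *)
Definition degree_function (R : idomainType) (deg : R -> int) : Prop :=
  (forall r s : R, r != 0 -> s != 0 -> deg (r * s) = deg r + deg s) /\
  (forall r s : R, r != 0 -> s != 0 -> r + s != 0 ->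
     deg (r + s) <= Num.max (deg r) (deg s)).

Definition nonneg_degree_function (R : idomainType) (deg : R -> int) : Prop :=
  degree_function deg /\ (forall r : R, r != 0 -> 0 <= deg r).

(* F_0 = { r : deg r <= 0 } (including r = 0, of degree -oo). *)
Definition F0 (R : idomainType) (deg : R -> int) (r : R) : Prop :=
  r = 0 \/ deg r <= 0.

Definition Delta0 (R : idomainType) (r : R) : Prop :=
  forall deg : R -> int, nonneg_degree_function deg -> F0 deg r.

Definition degree_rigid (R : idomainType) : Prop :=
  forall r : R, Delta0 r.

Definition is_subring (A : idomainType) (S : A -> Prop) : Prop :=
  S 1 /\ (forall a b, S a -> S b -> S (a - b)) /\
  (forall a b, S a -> S b -> S (a * b)).

Definition strongly_invariant (R : idomainType) : Prop :=
  forall (n : nat) (S : mpoly R n -> Prop), is_subring S ->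
  forall y : nat -> mpoly R n,
    (* R^{[n]} = S[y_0, ..., y_{n-1}] *)
    (forall p : mpoly R n, exists q : mpoly (mpoly R n) n,
        mcoef_in S q /\ meval q y = p) ->
    (* y_0, ..., y_{n-1} algebraically independent over S, i.e. S[y] = S^{[n]} *)
    (forall q : mpoly (mpoly R n) n, mcoef_in S q -> meval q y = 0 -> q = 0) ->
    (* R = S (R identified with the constants of R^{[n]}) *)
    forall p : mpoly R n, S p <-> exists r : R, p = @mconst R n r.

(* Main.v *)
Require Import Defs.
From HB Require Import structures.
From mathcomp Require Import all_boot all_order all_algebra.
From mathcomp Require Import zify ring.
From Stdlib Require Import Classical ClassicalEpsilon.
Import Order.TTheory GRing.Theory Num.Theory.
Set Implicit Arguments. Unset Strict Implicit. Unset Printing Implicit Defensive.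
Local Open Scope ring_scope.

Section NatDeg.
Variable A : idomainType.
Variable e : A -> nat.
Hypothesis e0 : e 0 = 0%N.
Hypothesis eM : forall a b : A, a != 0 -> b != 0 -> e (a * b) = (e a + e b)%N.
Hypothesis eD : forall a b : A, (e (a + b) <= maxn (e a) (e b))%N.

Lemma e1 : e 1 = 0%N.
Proof. have := eM (oner_neq0 A) (oner_neq0 A); rewrite mulr1; set x := e 1; lia. Qed.

Lemma eN (a : A) : e (- a) = e a.
Proof.
have hN1 : e (-1) = 0%N.
  have hn : (-1 : A) != 0 by rewrite oppr_eq0 oner_neq0.
  have := eM hn hn; rewrite mulrNN mulr1 e1 => h; lia.
have [->|a0] := eqVneq a 0; first by rewrite oppr0.
have hn : (-1 : A) != 0 by rewrite oppr_eq0 oner_neq0.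
by rewrite -mulN1r eM // hN1.
Qed.

Lemma eM_le (a b : A) : (e (a * b) <= e a + e b)%N.
Proof.
have [->|a0] := eqVneq a 0; first by rewrite mul0r e0.
have [->|b0] := eqVneq b 0; first by rewrite mulr0 e0.
by rewrite eM.
Qed.

Lemma e_strict (a b : A) : a != 0 -> (e b < e a)%N -> e (a + b) = e a /\ a + b != 0.
Proof.
move=> a0 lt.
have h1 := eD a b.
have h2 := eD (a + b) (- b).
rewrite addrK eN in h2.
have E : e (a + b) = e a by lia.
split=> //; apply/eqP=> ab0; rewrite ab0 e0 in E; lia.
Qed.

Lemma e_sum_le (I : Type) (r : seq I) (P : pred I) (F : I -> A) m :
  (forall i, P i -> (e (F i) <= m)%N) -> (e (\sum_(i <- r | P i) F i) <= m)%N.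
Proof.
move=> H; apply: (big_ind (fun x => (e x <= m)%N)) => //; first by rewrite e0.
move=> x y hx hy; have := eD x y; lia.
Qed.

Lemma e_sum_lt (I : Type) (r : seq I) (P : pred I) (F : I -> A) m :
  (forall i, P i -> (F i == 0) || (e (F i) < m)%N) ->
  let s := \sum_(i <- r | P i) F i in (s == 0) || (e s < m)%N.
Proof.
move=> H /=; apply: (big_ind (fun x => (x == 0) || (e x < m)%N)) => //.
  by rewrite eqxx.
move=> x y hx hy; case/orP: hx => [/eqP->|hx]; first by rewrite add0r.
case/orP: hy => [/eqP->|hy]; first by rewrite addr0 hx orbT.
have := eD x y; move=> h; apply/orP; right; lia.
Qed.

Definition Dn (p : {poly A}) : nat := \max_(i < size p) e p`_i.

Lemma Dn_coef (p : {poly A}) (i : nat) : (e p`_i <= Dn p)%N.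
Proof.
case: (ltnP i (size p)) => hi.
  exact: (@leq_bigmax_cond _ _ (fun j : 'I_(size p) => e p`_j) (Ordinal hi)).
by rewrite nth_default // e0.
Qed.

Lemma Dn_le (p : {poly A}) (m : nat) : (forall i, (e p`_i <= m)%N) -> (Dn p <= m)%N.
Proof. by move=> H; apply/bigmax_leqP => i _; exact: H. Qed.

Lemma Dn_add (p q : {poly A}) : (Dn (p + q) <= maxn (Dn p) (Dn q))%N.
Proof.
apply: Dn_le => i; rewrite coefD.
apply: leq_trans (eD _ _) _; rewrite geq_max !leq_max !Dn_coef ?orbT //.
Qed.

Lemma Dn_mul_le (p q : {poly A}) : (Dn (p * q) <= Dn p + Dn q)%N.
Proof.
apply: Dn_le => i; rewrite coefM; apply: e_sum_le => j _.
apply: leq_trans (eM_le _ _) _; exact: leq_add (Dn_coef _ _) (Dn_coef _ _).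
Qed.

Lemma Dn_attain (p : {poly A}) : p != 0 -> exists i, p`_i != 0 /\ e p`_i = Dn p.
Proof.
move=> p0.
have sp : (0 < #|'I_(size p)|)%N by rewrite card_ord size_poly_gt0.
have [i0 Ei] := @bigop.eq_bigmax _ (fun j : 'I_(size p) => e p`_j) sp.
have [c0|c0] := eqVneq p`_i0 0.
  exists (size p).-1; split; first by rewrite -lead_coefE lead_coef_eq0.
  have := Dn_coef p (size p).-1; rewrite /Dn Ei c0 e0 => h; lia.
by exists i0; rewrite /Dn Ei.
Qed.

Lemma Dn_mul_ge (p q : {poly A}) : p != 0 -> q != 0 -> (Dn p + Dn q <= Dn (p * q))%N.
Proof.
move=> p0 q0.
have [i1 [pi1 Ei1]] := Dn_attain p0.
pose P i := (p`_i != 0) && (e p`_i == Dn p).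
have exP : exists i, P i by exists i1; rewrite /P pi1 Ei1 eqxx.
pose i0 := ex_minn exP.
have [Pi0 mini0] : P i0 /\ (forall j, P j -> (i0 <= j)%N).
  by rewrite /i0; case: ex_minnP.
have [j1 [qj1 Ej1]] := Dn_attain q0.
pose Q j := (q`_j != 0) && (e q`_j == Dn q).
have exQ : exists j, Q j by exists j1; rewrite /Q qj1 Ej1 eqxx.
pose j0 := ex_minn exQ.
have [Qj0 minj0] : Q j0 /\ (forall j, Q j -> (j0 <= j)%N).
  by rewrite /j0; case: ex_minnP.
move: Pi0 Qj0; rewrite /P /Q => /andP[pi0 /eqP Ei0] /andP[qj0 /eqP Ej0].
set k := (i0 + j0)%N.
have hk : (i0 < k.+1)%N by rewrite /k; lia.
have := Dn_coef (p * q) k; rewrite coefM (bigD1 (Ordinal hk)) //=.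
have Hmain : e (p`_i0 * q`_(k - i0)) = (Dn p + Dn q)%N.
  by rewrite /k addKn eM // Ei0 Ej0.
have Hrest := @e_sum_lt _ (index_enum 'I_k.+1) (fun j : 'I_k.+1 => j != Ordinal hk)
  (fun j : 'I_k.+1 => p`_j * q`_(k - j)) (Dn p + Dn q).
have Hprem : forall j : 'I_k.+1, j != Ordinal hk ->
    (p`_j * q`_(k - j) == 0) || (e (p`_j * q`_(k - j)) < Dn p + Dn q)%N.
  move=> j /eqP hj.
  have hj' : (j : nat) != i0 by apply/eqP => E; apply: hj; apply: val_inj.
  have [pz|pz] := eqVneq p`_j 0; first by rewrite pz mul0r eqxx.
  have [qz|qz] := eqVneq q`_(k - j) 0; first by rewrite qz mulr0 eqxx.
  apply/orP; right; rewrite eM //.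
  have lej := Dn_coef p j; have leq' := Dn_coef q (k - j).
  case: (ltngtP j i0) => cj.
  - have nP : ~~ P j by apply/negP => /mini0; lia.
    move: nP; rewrite /P pz /= => /eqP ne.
    have : (e p`_j < Dn p)%N by rewrite ltn_neqAle lej andbT; apply/eqP.
    move=> h; by rewrite -addSn leq_add.
  - have hkj : (k - j < j0)%N by have := ltn_ord j; rewrite /k; move: cj; move: (j : nat) => jj; lia.
    have nQ : ~~ Q (k - j)%N by apply/negP => /minj0; lia.
    move: nQ; rewrite /Q qz /= => /eqP ne.
    have : (e q`_(k - j) < Dn q)%N by rewrite ltn_neqAle leq' andbT; apply/eqP.
    move=> h; by rewrite -addnS leq_add.
  - by move: hj'; rewrite cj eqxx.
have := Hrest Hprem.
set b := \sum_(_ <- _ | _) _.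
move=> hb.
have a0 : p`_i0 * q`_(k - i0) != 0 by rewrite mulf_neq0 // /k addKn.
case/orP: hb => [/eqP->|hb]; first by rewrite addr0 Hmain.
rewrite -Hmain in hb.
by have [-> _] := e_strict a0 hb; rewrite Hmain.
Qed.
End NatDeg.

Section DegConv.
Variable A : idomainType.
Variable deg : A -> int.
Hypothesis hdeg : nonneg_degree_function deg.

Definition eN_of (a : A) : nat := if a == 0 then 0%N else `|deg a|%N.

Lemma eN_ofE (a : A) : a != 0 -> (eN_of a)%:Z = deg a.
Proof.
move=> a0; rewrite /eN_of (negbTE a0) gez0_abs //.
by case: hdeg => _ /(_ a a0).
Qed.

Lemma eN_of0 : eN_of 0 = 0%N.
Proof. by rewrite /eN_of eqxx. Qed.

Lemma eN_ofM (a b : A) : a != 0 -> b != 0 -> eN_of (a * b) = (eN_of a + eN_of b)%N.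
Proof.
move=> a0 b0; apply/eqP; rewrite -eqz_nat PoszD !eN_ofE ?mulf_neq0 //.
by case: hdeg => -[hm _] _; rewrite hm.
Qed.

Lemma eN_ofD (a b : A) : (eN_of (a + b) <= maxn (eN_of a) (eN_of b))%N.
Proof.
have [ab0|ab0] := eqVneq (a + b) 0; first by rewrite ab0 eN_of0.
have [a0|a0] := eqVneq a 0; first by rewrite a0 add0r leq_max leqnn orbT.
have [b0|b0] := eqVneq b 0; first by rewrite b0 addr0 leq_max leqnn.
have := (proj2 (proj1 hdeg)) a b a0 b0 ab0.
by rewrite -!eN_ofE // le_max !lez_nat leq_max.
Qed.

Definition Gdeg (p : {poly A}) : int := (Dn eN_of p)%:Z.

Lemma Gdeg_nonneg : nonneg_degree_function Gdeg.
Proof.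
split; last by move=> r _; rewrite /Gdeg lez_nat.
split.
  move=> p q p0 q0; rewrite /Gdeg -PoszD; congr Posz; apply/eqP; rewrite eqn_leq.
  rewrite Dn_mul_le ?Dn_mul_ge //; [exact: eN_of0|exact: eN_ofM|exact: eN_ofD|
     exact: eN_of0|exact: eN_ofM|exact: eN_ofD].
move=> p q _ _ _; rewrite /Gdeg le_max !lez_nat -leq_max.
apply: Dn_add; [exact: eN_of0|exact: eN_ofD].
Qed.

Lemma Gdeg_C (c : A) : Gdeg c%:P = (eN_of c)%:Z.
Proof.
rewrite /Gdeg /Dn size_polyC; have [->|c0] := eqVneq c 0.
  by rewrite big_ord0 eN_of0.
by rewrite /= big_ord1 coefC.
Qed.
End DegConv.

Definition Tdeg (A : idomainType) (p : {poly A}) : int := ((size p).-1)%:Z.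

Lemma Tdeg_nonneg (A : idomainType) : nonneg_degree_function (@Tdeg A).
Proof.
split; last by move=> r _; rewrite /Tdeg lez_nat.
split.
  move=> p q p0 q0; rewrite /Tdeg -PoszD size_mul //; congr Posz.
  move: (p0) (q0); rewrite -!size_poly_gt0; case: (size p) => [|a]; case: (size q) => [|b] //= _ _; lia.
move=> p q _ _ _; rewrite /Tdeg le_max !lez_nat -leq_max.
move: (size_polyD p q); move: (size (p + q)) (size p) (size q) => a b c; lia.
Qed.

Lemma delta0_const (A : idomainType) (n : nat) (p : mpoly A n) :
  Delta0 p -> exists r, p = @mconst A n r.
Proof.
elim: n p => [|n IH] p hp; first by exists p.
have hsz : (size (p : {poly mpoly A n}) <= 1)%N.
  case: (hp _ (@Tdeg_nonneg (mpoly A n))) => [->|]; first by rewrite size_poly0.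
  rewrite /Tdeg lez_nat; lia.
have Ep := size1_polyC hsz.
have hc : Delta0 ((p : {poly mpoly A n})`_0).
  move=> deg hdeg; have := hp _ (Gdeg_nonneg hdeg).
  rewrite /F0; case=> [p0|]; first by left; rewrite p0 coef0.
  rewrite {1}Ep Gdeg_C lez_nat leqn0 => /eqP h.
  have [c0|c0] := eqVneq ((p : {poly mpoly A n})`_0) 0; first by rewrite /F0; left.
  by rewrite /F0; right; rewrite -eN_ofE // h.
have [r Er] := IH _ hc.
by exists r; rewrite /= [p]Ep Er.
Qed.

Lemma frac_rep (R : idomainType) (x : {fraction R}) :
  exists a b : R, b != 0 /\ x * tofrac b = tofrac a.
Proof.
elim/quotW: x => r.
exists (\n_r), (\d_r); split; first exact: denom_ratioP.
unlock tofrac.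
rewrite !piE.
apply/eqmodP; rewrite /= FracField.equivfE /FracField.mulf.
by rewrite !numden_Ratio ?oner_neq0 ?mulf_neq0 ?oner_neq0 ?denom_ratioP // !mulr1 mulrC.
Qed.


Section Mconst.
Variable A : idomainType.

Lemma mconstD n (a b : A) : mconst n (a + b) = mconst n a + mconst n b.
Proof. by elim: n => //= n ->; rewrite polyCD. Qed.
Lemma mconstM n (a b : A) : mconst n (a * b) = mconst n a * mconst n b.
Proof. by elim: n => //= n ->; rewrite polyCM. Qed.
Lemma mconst1 n : mconst n (1 : A) = 1.
Proof. by elim: n => //= n ->. Qed.
Lemma mconst0 n : mconst n (0 : A) = 0.
Proof. by elim: n => //= n ->. Qed.
Lemma mconst_eq0 n (a : A) : mconst n a = 0 -> a = 0.
Proof. elim: n => //= n IH /eqP; rewrite polyC_eq0 => /eqP; exact: IH. Qed.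
Lemma mconstN n (a : A) : mconst n (- a) = - mconst n a.
Proof. by elim: n => //= n ->; rewrite polyCN. Qed.
Lemma mconstXn n (a : A) k : mconst n (a ^+ k) = mconst n a ^+ k.
Proof. by elim: k => [|k IH]; rewrite ?mconst1 // !exprS mconstM IH. Qed.
End Mconst.

Lemma pullback_nonneg (A B : idomainType) (f : A -> B)
  (fM : forall a b, f (a * b) = f a * f b) (fD : forall a b, f (a + b) = f a + f b)
  (fnz : forall a, a != 0 -> f a != 0) (D : B -> int) :
  nonneg_degree_function D -> nonneg_degree_function (fun a => D (f a)).
Proof.
case=> -[hM hD] hN; split; last by move=> r /fnz; exact: hN.
split; first by move=> r s r0 s0; rewrite fM hM ?fnz.
by move=> r s r0 s0 rs0; rewrite fD hD ?fnz // -fD fnz.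
Qed.

Lemma rigid_mconst (R : idomainType) (hR : degree_rigid R) n (D : mpoly R n -> int) :
  nonneg_degree_function D -> forall r, r != 0 -> D (mconst n r) = 0.
Proof.
move=> hD r r0.
have hD' := @pullback_nonneg R (mpoly R n) (mconst n) (@mconstM R n) (@mconstD R n)
  (fun a a0 => introN eqP (fun h => (negP a0) (introT eqP (mconst_eq0 h)))) D hD.
case: (hR r _ hD') => [/eqP|h]; first by rewrite (negbTE r0).
apply/eqP; rewrite eq_le h /=.
by case: hD => _ /(_ (mconst n r)); apply; apply/eqP => /mconst_eq0 /eqP; rewrite (negbTE r0).
Qed.

Lemma partA (R : idomainType) (hR : degree_rigid R) n (p : mpoly R n) :
  Delta0 p <-> exists r : R, p = mconst n r.
Proof.
split; first exact: delta0_const.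
case=> r -> D hD; rewrite /F0.
have [->|r0] := eqVneq r 0; first by left; rewrite mconst0.
by right; rewrite (rigid_mconst hR hD r0).
Qed.

Lemma meval_rmorph (A : idomainType) n (y : nat -> A) :
  exists g : {rmorphism mpoly A n -> A}, forall p, g p = meval p y.
Proof.
elim: n => [|n [g Eg]]; first by exists idfun.
have cfu : commr_rmorph g (y n) by move=> x; rewrite /GRing.comm mulrC.
exists (horner_morph cfu) => p.
exact: (congr1 (fun q => q.[y n]) (eq_map_poly Eg p)).
Qed.

Section Meval.
Variables (A : idomainType) (y : nat -> A).
Lemma mevalD n (p q : mpoly A n) : meval (p + q) y = meval p y + meval q y.
Proof. by have [g Eg] := meval_rmorph n y; rewrite -!Eg rmorphD. Qed.
Lemma mevalM n (p q : mpoly A n) : meval (p * q) y = meval p y * meval q y.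
Proof. by have [g Eg] := meval_rmorph n y; rewrite -!Eg rmorphM. Qed.
Lemma mevalB n (p q : mpoly A n) : meval (p - q) y = meval p y - meval q y.
Proof. by have [g Eg] := meval_rmorph n y; rewrite -!Eg rmorphB. Qed.
Lemma meval0 n : meval (0 : mpoly A n) y = 0.
Proof. by have [g Eg] := meval_rmorph n y; rewrite -!Eg rmorph0. Qed.
Lemma meval_sum n I (r : seq I) (P : pred I) (F : I -> mpoly A n) :
  meval (\sum_(i <- r | P i) F i) y = \sum_(i <- r | P i) meval (F i) y.
Proof. by have [g Eg] := meval_rmorph n y; rewrite -!Eg rmorph_sum; apply: eq_bigr => i _; rewrite Eg. Qed.
Lemma meval_polyC n (c : mpoly A n) : meval (c%:P : mpoly A n.+1) y = meval c y.
Proof.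
have [g Eg] := meval_rmorph n y.
have -> : meval (c%:P : mpoly A n.+1) y = (map_poly g c%:P).[y n]
  := congr1 (fun q => q.[y n]) (esym (eq_map_poly Eg _)).
by rewrite map_polyC hornerC; exact: Eg.
Qed.
Lemma meval_X n : meval ('X : mpoly A n.+1) y = y n.
Proof.
have [g Eg] := meval_rmorph n y.
have -> : meval ('X : mpoly A n.+1) y = (map_poly g 'X).[y n]
  := congr1 (fun q => q.[y n]) (esym (eq_map_poly Eg _)).
by rewrite map_polyX hornerX.
Qed.
Lemma meval_Xn n k : meval ('X^k : mpoly A n.+1) y = y n ^+ k.
Proof.
have [g Eg] := meval_rmorph n.+1 y.
by rewrite -[LHS]Eg rmorphXn Eg meval_X.
Qed.
Lemma meval_mconst n (a : A) : meval (mconst n a) y = a.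
Proof.
elim: n => [//|n IH]; have -> : mconst n.+1 a = (mconst n a)%:P by [].
by rewrite meval_polyC.
Qed.
End Meval.


Fixpoint Xm (A : idomainType) (n : nat) (a : nat -> nat) : mpoly A n :=
  match n return mpoly A n with
  | 0 => 1
  | n'.+1 => (@Xm A n' a)%:P * 'X^(a n')
  end.

Section Mcoef.
Variables (A : idomainType) (S : A -> Prop).
Hypothesis hS : is_subring S.

Lemma S0 : S 0.
Proof. by case: hS => h1 [hB _]; rewrite -(subrr 1); apply: hB. Qed.
Lemma SB a b : S a -> S b -> S (a - b).
Proof. by case: hS => _ [hB _]; apply: hB. Qed.
Lemma SM a b : S a -> S b -> S (a * b).
Proof. by case: hS => _ [_ hM]; apply: hM. Qed.
Lemma SD a b : S a -> S b -> S (a + b).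
Proof.
move=> ha hb; have -> : a + b = a - (0 - b) by rewrite sub0r opprK.
by apply: SB => //; apply: SB => //; exact: S0.
Qed.
Lemma S1 : S 1.
Proof. by case: hS. Qed.

Lemma mcoef0 n : mcoef_in S (0 : mpoly A n).
Proof. elim: n => [|n IH] /=; first exact: S0. by move=> i; rewrite coef0. Qed.

Lemma mcoefB n (p q : mpoly A n) : mcoef_in S p -> mcoef_in S q -> mcoef_in S (p - q).
Proof.
elim: n p q => [|n IH] p q /=; first exact: SB.
by move=> hp hq i; rewrite coefB; apply: IH.
Qed.

Lemma mcoefD n (p q : mpoly A n) : mcoef_in S p -> mcoef_in S q -> mcoef_in S (p + q).
Proof.
move=> hp hq; have -> : p + q = p - (0 - q) by rewrite sub0r opprK.
by apply: mcoefB => //; apply: mcoefB => //; exact: mcoef0.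
Qed.

Lemma mcoef_sum n I (r : seq I) (P : pred I) (F : I -> mpoly A n) :
  (forall i, P i -> mcoef_in S (F i)) -> mcoef_in S (\sum_(i <- r | P i) F i).
Proof.
move=> H; apply: (big_ind (@mcoef_in A S n)) => //; [exact: mcoef0|exact: mcoefD].
Qed.

Lemma mcoefM n (p q : mpoly A n) : mcoef_in S p -> mcoef_in S q -> mcoef_in S (p * q).
Proof.
elim: n p q => [|n IH] p q /=; first exact: SM.
move=> hp hq i; rewrite coefM; apply: mcoef_sum => j _; exact: IH.
Qed.

Lemma mcoef_const n (a : A) : S a -> mcoef_in S (mconst n a).
Proof.
elim: n => [//|n IH] ha /= i; rewrite coefC; case: (i == 0%N); [exact: IH|exact: mcoef0].
Qed.

Lemma mcoef_const_inv n (a : A) : mcoef_in S (mconst n a) -> S a.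
Proof. elim: n => [//|n IH] /= /(_ 0%N); rewrite coefC eqxx; exact: IH. Qed.

Lemma mcoef1 n : mcoef_in S (1 : mpoly A n).
Proof. rewrite -(mconst1 A n); apply: mcoef_const; exact: S1. Qed.

Lemma mcoef_polyC n (c : mpoly A n) : mcoef_in S c -> mcoef_in S (c%:P : mpoly A n.+1).
Proof. move=> hc i /=; rewrite coefC; case: (i == 0%N) => //; exact: mcoef0. Qed.

Lemma mcoef_Xn n k : mcoef_in S ('X^k : mpoly A n.+1).
Proof. move=> i /=; rewrite coefXn; case: (i == k); [exact: mcoef1|exact: mcoef0]. Qed.

Lemma mcoef_Xm n a : mcoef_in S (Xm A n a).
Proof.
elim: n => [|n IH]; first exact: S1.
exact: (mcoefM (mcoef_polyC IH) (mcoef_Xn _ _)).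
Qed.
End Mcoef.

Section Mcoefn.
Variable A : idomainType.

Fixpoint mcoefn (n : nat) : mpoly A n -> (nat -> nat) -> A :=
  match n return mpoly A n -> (nat -> nat) -> A with
  | 0 => fun p _ => p
  | n'.+1 => fun p a => @mcoefn n' (p`_(a n')) a
  end.

Lemma mcoefn0 n a : mcoefn (0 : mpoly A n) a = 0.
Proof. by elim: n => //= n IH; rewrite coef0. Qed.

Lemma mcoefnD n (p q : mpoly A n) a : mcoefn (p + q) a = mcoefn p a + mcoefn q a.
Proof. by elim: n p q => //= n IH p q; rewrite coefD IH. Qed.

Lemma mcoefn_sum n I (r : seq I) (P : pred I) (F : I -> mpoly A n) a :
  mcoefn (\sum_(i <- r | P i) F i) a = \sum_(i <- r | P i) mcoefn (F i) a.
Proof.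
apply: (big_morph (fun p => mcoefn p a)); [move=> p q; exact: mcoefnD|exact: mcoefn0].
Qed.

Lemma mcoefn_constM n (b : A) (p : mpoly A n) a :
  mcoefn (mconst n b * p) a = b * mcoefn p a.
Proof. by elim: n p => //= n IH p; rewrite coefCM IH. Qed.

Lemma mcoefn_ext n (p : mpoly A n) a b :
  (forall i, (i < n)%N -> a i = b i) -> mcoefn p a = mcoefn p b.
Proof.
elim: n p => //= n IH p H; rewrite H // IH // => i hi; apply: H; lia.
Qed.

Lemma mcoefn_Xm_step n a b :
  mcoefn (Xm A n.+1 a) b = if b n == a n then mcoefn (Xm A n a) b else 0.
Proof.
rewrite /= coefCM coefXn; case: (b n == a n); first by rewrite mulr1.
by rewrite mulr0 mcoefn0.
Qed.

Lemma mcoefn_Xm_eq n a b : (forall i, (i < n)%N -> a i = b i) -> mcoefn (Xm A n a) b = 1.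
Proof.
elim: n => [//|n IH] H; rewrite mcoefn_Xm_step H // eqxx IH // => i hi; apply: H; lia.
Qed.

Lemma mcoefn_Xm_neq n a b : (exists i, (i < n)%N /\ a i <> b i) -> mcoefn (Xm A n a) b = 0.
Proof.
elim: n => [|n IH] [i [hi ne]]; first by [].
rewrite mcoefn_Xm_step; case: eqP => // E.
apply: IH; exists i; split => //.
case: (ltngtP i n) => // [|E']; first lia.
by rewrite E' in ne; case: ne.
Qed.

Fixpoint bdeg (n : nat) (L : nat) : mpoly A n -> Prop :=
  match n return mpoly A n -> Prop with
  | 0 => fun _ => True
  | n'.+1 => fun p => (size p <= L.+1)%N /\ forall i, @bdeg n' L p`_i
  end.

Lemma bdeg0 n L : bdeg L (0 : mpoly A n).
Proof. elim: n => //= n IH; rewrite size_poly0; split => // i; rewrite coef0; exact: IH. Qed.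

Lemma bdegD n L (p q : mpoly A n) : bdeg L p -> bdeg L q -> bdeg L (p + q).
Proof.
elim: n p q => //= n IH p q [sp hp] [sq hq]; split => [|i].
  by apply: leq_trans (size_polyD _ _) _; rewrite geq_max sp sq.
by rewrite coefD; apply: IH.
Qed.

Lemma bdeg_sum n L I (r : seq I) (P : pred I) (F : I -> mpoly A n) :
  (forall i, P i -> bdeg L (F i)) -> bdeg L (\sum_(i <- r | P i) F i).
Proof. move=> H; apply: (big_ind (@bdeg n L)) => //; [exact: bdeg0|exact: bdegD]. Qed.

Lemma bdeg_mono n L L' (p : mpoly A n) : (L <= L')%N -> bdeg L p -> bdeg L' p.
Proof.
move=> hL; elim: n p => //= n IH p [sp hp]; split => [|i]; last exact: IH.
by apply: leq_trans sp _.
Qed.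

Lemma bdegM n L L' (p q : mpoly A n) : bdeg L p -> bdeg L' q -> bdeg (L + L') (p * q).
Proof.
elim: n p q => //= n IH p q [sp hp] [sq hq]; split => [|i].
  have := size_mul_leq p q; move: sp sq; move: (size p) (size q) (size (p * q)) => a b c; lia.
by rewrite coefM; apply: bdeg_sum => j _; apply: IH.
Qed.

Lemma bdeg_const n (a : A) : bdeg 0 (mconst n a).
Proof.
elim: n => //= n IH; split; first by rewrite size_polyC; case: (_ != 0).
by move=> i; rewrite coefC; case: (i == 0%N) => //; exact: bdeg0.
Qed.

Lemma bdeg1 n : bdeg 0 (1 : mpoly A n).
Proof. by rewrite -(mconst1 A n); exact: bdeg_const. Qed.

Lemma bdegX n L (p : mpoly A n) k : bdeg L p -> bdeg (k * L) (p ^+ k).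
Proof.
move=> hp; elim: k => [|k IH]; first by rewrite expr0 mul0n; exact: bdeg1.
by rewrite exprS mulSn; apply: bdegM.
Qed.

Lemma bdeg_exists n (p : mpoly A n) : exists L, bdeg L p.
Proof.
elim: n p => [|n IH] p; first by exists 0%N.
have H : forall i, exists L, bdeg L p`_i by move=> i; exact: IH.
have [L HL] : exists L, forall i, (i < size p)%N -> bdeg L p`_i.
  elim: (size p) => [|m [L HL]]; first by exists 0%N.
  have [L' HL'] := H m.
  exists (maxn L L') => i hi.
  case: (ltnP i m) => hm.
    by apply: bdeg_mono (HL i hm); rewrite leq_maxl.
  have -> : i = m by lia.
  by apply: bdeg_mono HL'; rewrite leq_maxr.
exists (maxn L (size p)) => /=; split; first by apply: leq_trans (leq_maxr L (size p)) _; exact: leqnSn.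
move=> i; case: (ltnP i (size p)) => hi.
  by apply: bdeg_mono (HL i hi); rewrite leq_maxl.
by rewrite nth_default //; exact: bdeg0.
Qed.

Lemma mcoefn_zero n L (p : mpoly A n) : bdeg L p ->
  (forall a, (forall i, (i < n)%N -> (a i <= L)%N) -> mcoefn p a = 0) -> p = 0.
Proof.
elim: n p => [|n IH] p; first by move=> _ /(_ (fun _ => 0%N)); apply.
move=> /= [sp hp] H; apply/polyP => i; rewrite coef0.
case: (leqP i L) => hi; last by rewrite nth_default //; apply: leq_trans sp _.
apply: (IH _ (hp i)) => a ha.
pose a' := fun k => if k == n then i else a k.
have := H a'; rewrite /a' eqxx => <-.
  by apply: mcoefn_ext => k hk; rewrite (_ : (k == n) = false) //; apply/eqP; lia.
move=> k hk; case: eqP => // E; apply: ha; lia.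
Qed.
End Mcoefn.


Lemma meval_Xm (A : idomainType) (y : nat -> A) n a :
  meval (Xm A n a) y = \prod_(o < n) y o ^+ a o.
Proof.
elim: n => [|n IH]; first by rewrite big_ord0.
have -> : Xm A n.+1 a = (Xm A n a)%:P * 'X^(a n) by [].
by rewrite mevalM meval_polyC meval_Xn IH big_ord_recr.
Qed.

Definition toNat n K (f : {ffun 'I_n -> 'I_K}) (k : nat) : nat :=
  match @insub _ (fun k => (k < n)%N) 'I_n k with Some o => nat_of_ord (f o) | None => 0%N end.

Lemma toNatE n K (f : {ffun 'I_n -> 'I_K}) (o : 'I_n) : toNat f o = f o.
Proof. by rewrite /toNat valK. Qed.

Lemma bdeg_prod (A : idomainType) n K m (G : 'I_m -> mpoly A n) :
  (forall o, bdeg K (G o)) -> bdeg (m * K) (\prod_(o < m) G o).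
Proof.
elim: m G => [|m IH] G H; first by rewrite big_ord0; exact: bdeg1.
rewrite big_ord_recr mulSn addnC; apply: bdegM; [apply: IH => o; exact: H|exact: H].
Qed.

Section PartB.
Variables (R : idomainType) (hR : degree_rigid R) (n : nat).
Variable S : mpoly R n -> Prop.
Hypothesis hS : is_subring S.
Variable y : nat -> mpoly R n.
Hypothesis hsurj : forall p : mpoly R n, exists q : mpoly (mpoly R n) n,
        mcoef_in S q /\ meval q y = p.
Hypothesis hinj : forall q : mpoly (mpoly R n) n, mcoef_in S q -> meval q y = 0 -> q = 0.

Lemma uniq_rep (q1 q2 : mpoly (mpoly R n) n) :
  mcoef_in S q1 -> mcoef_in S q2 -> meval q1 y = meval q2 y -> q1 = q2.
Proof.
move=> h1 h2 E; apply/eqP; rewrite -subr_eq0; apply/eqP; apply: hinj.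
  exact: mcoefB.
by rewrite mevalB E subrr.
Qed.

Definition frep (r : R) : mpoly (mpoly R n) n :=
  proj1_sig (constructive_indefinite_description _ (hsurj (mconst n r))).

Lemma frepP r : mcoef_in S (frep r) /\ meval (frep r) y = mconst n r.
Proof. exact: (proj2_sig (constructive_indefinite_description _ (hsurj (mconst n r)))). Qed.

Lemma RinS r : S (mconst n r).
Proof.
have fM : forall a b, frep (a * b) = frep a * frep b.
  move=> a b; have [ha Ea] := frepP a; have [hb Eb] := frepP b; have [hab Eab] := frepP (a * b).
  by apply: uniq_rep => //; [exact: mcoefM|rewrite mevalM Ea Eb Eab mconstM].
have fD : forall a b, frep (a + b) = frep a + frep b.
  move=> a b; have [ha Ea] := frepP a; have [hb Eb] := frepP b; have [hab Eab] := frepP (a + b).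
  by apply: uniq_rep => //; [exact: mcoefD|rewrite mevalD Ea Eb Eab mconstD].
have fnz : forall a, a != 0 -> frep a != 0.
  move=> a a0; apply/eqP => E; have [_ Ea] := frepP a; rewrite E meval0 in Ea.
  by move/eqP: a0; apply; apply: (@mconst_eq0 R n); rewrite -Ea.
have f0 : frep 0 = 0.
  have [h E] := frepP 0; apply: uniq_rep => //; first exact: mcoef0.
  by rewrite E meval0 mconst0.
have hd : Delta0 (frep r).
  move=> D hD; have := hR r (pullback_nonneg fM fD fnz hD); rewrite /F0.
  by case=> [->|h]; [left|right].
have [b Eb] := delta0_const hd.
have [hr Er] := frepP r.
rewrite Eb in hr Er; rewrite meval_mconst in Er.
by rewrite -Er; exact: (mcoef_const_inv hr).
Qed.

Lemma S_sum I (r : seq I) (P : pred I) (F : I -> mpoly R n) :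
  (forall i, P i -> S (F i)) -> S (\sum_(i <- r | P i) F i).
Proof. by move=> H; apply: (big_ind S) => //; [exact: S0|exact: SD]. Qed.

Lemma S_exp (s : mpoly R n) k : S s -> S (s ^+ k).
Proof.
move=> hs; elim: k => [|k IH]; first by rewrite expr0; exact: S1.
by rewrite exprS; apply: SM.
Qed.

Lemma transc (s : mpoly R n) (D : mpoly R n -> int) :
  nonneg_degree_function D -> s != 0 -> 0 < D s ->
  forall m (c : 'I_m -> R), \sum_(j < m) mconst n (c j) * s ^+ j = 0 -> forall j, c j = 0.
Proof.
move=> hD s0 Ds.
pose e := eN_of D.
have E0 : e 0 = 0%N := eN_of0 D.
have EM : forall a b : mpoly R n, a != 0 -> b != 0 -> e (a * b) = (e a + e b)%N := eN_ofM hD.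
have ED : forall a b : mpoly R n, (e (a + b)%R <= maxn (e a) (e b))%N := eN_ofD hD.
have es : (e s)%:Z = D s := eN_ofE hD s0.
have kpos : (0 < e s)%N by rewrite -ltz_nat es.
have econst : forall r, r != 0 -> e (mconst n r) = 0%N.
  move=> r r0; have mr0 : mconst n r != 0.
    by apply/eqP => /mconst_eq0 /eqP; rewrite (negbTE r0).
  by apply/eqP; rewrite -eqz_nat /e eN_ofE // (rigid_mconst hR hD r0).
have epow : forall j, e (s ^+ j) = (j * e s)%N.
  elim=> [|j IH]; first by rewrite expr0 mul0n; apply: (e1 E0 EM).
  by rewrite exprS EM ?expf_neq0 // IH mulSn.
have eterm : forall r j, r != 0 -> e (mconst n r * s ^+ j) = (j * e s)%N /\ mconst n r * s ^+ j != 0.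
  move=> r j r0; have mr0 : mconst n r != 0.
    by apply/eqP => /mconst_eq0 /eqP; rewrite (negbTE r0).
  split; last by rewrite mulf_neq0 ?expf_neq0.
  by rewrite EM ?expf_neq0 // econst // epow.
elim=> [|m IH] c; first by move=> _ [].
rewrite big_ord_recr /= => Hsum.
have cm : c ord_max = 0.
  apply/eqP; apply/negP => /negP cm0.
  have [ea a0] := eterm _ m cm0.
  have hb := @e_sum_lt _ e E0 ED _ (index_enum 'I_m) xpredT
     (fun j : 'I_m => mconst n (c (widen_ord (leqnSn m) j)) * s ^+ j) (m * e s)%N.
  move: hb; set b := \sum_(_ <- _ | _) _ => hb.
  have : (b == 0) || (e b < m * e s)%N.
    apply: hb => j _.
    have [cj|cj] := eqVneq (c (widen_ord (leqnSn m) j)) 0.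
      by rewrite cj mconst0 mul0r eqxx.
    have [ej _] := eterm _ j cj; apply/orP; right; rewrite ej ltn_mul2r kpos /=.
    exact: ltn_ord.
  case/orP => [/eqP b0|hb'].
    by move: Hsum; rewrite /b in b0; rewrite b0 add0r; apply/eqP.
  rewrite -ea in hb'.
  have [_ ne] := e_strict E0 EM ED a0 hb'.
  by move: ne; rewrite addrC /b Hsum eqxx.
rewrite cm mconst0 mul0r addr0 in Hsum.
have IH' := IH _ Hsum.
move=> j; case: (ltnP j m) => hj.
  by have := IH' (Ordinal hj); congr (c _ = _); apply: val_inj.
by rewrite (_ : j = ord_max) //; apply: val_inj => /=; have := ltn_ord j; lia.
Qed.

Lemma leq_expn_base (a b e : nat) : (a <= b)%N -> (a ^ e <= b ^ e)%N.
Proof. move=> hab; elim: e => [|e IH] //; rewrite !expnS leq_mul //. Qed.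

Lemma y_bound : exists dy, forall i, (i < n)%N -> bdeg dy (y i).
Proof.
suff : forall m, exists dy, forall i, (i < m)%N -> bdeg dy (y i) by [].
elim=> [|m [d Hd]]; first by exists 0%N.
have [d' Hd'] := bdeg_exists (y m).
exists (maxn d d') => i hi; case: (ltnP i m) => h.
  by apply: bdeg_mono (Hd i h); rewrite leq_maxl.
have -> : i = m by lia.
by apply: bdeg_mono Hd'; rewrite leq_maxr.
Qed.

Lemma SinR (s : mpoly R n) : S s -> exists r, s = mconst n r.
Proof.
move=> hs; apply: NNPP => Hnc.
have nD : ~ Delta0 s by move/delta0_const.
have [D HD] := not_all_ex_not _ _ nD.
have [hD nF] := imply_to_and _ _ HD.
have s0 : s != 0 by apply/eqP => E; apply: nF; left.
have Ds : 0 < D s by rewrite ltNge; apply/negP => h; apply: nF; right.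
have Htr := transc hD s0 Ds.
have [ds hds] := bdeg_exists s.
have [dy hdy] := y_bound.
pose E := (ds + n * dy)%N.
pose M := ((E.+1) ^ n)%N.
pose L := (M * E)%N.
pose I := ('I_M.+1 * {ffun 'I_n -> 'I_M.+1})%type.
pose F (i : I) : mpoly R n := s ^+ i.1 * \prod_(o < n) y o ^+ i.2 o.
have bF : forall i, bdeg L (F i).
  move=> [j a]; rewrite /F /=.
  have h1 := bdegX j hds.
  have h2 : bdeg (n * (M * dy)) (\prod_(o < n) y o ^+ a o).
    apply: bdeg_prod => o; apply: bdeg_mono (bdegX (a o) (hdy o (ltn_ord o))).
    by rewrite leq_mul2r -ltnS ltn_ord orbT.
  apply: bdeg_mono (bdegM h1 h2).
  have := ltn_ord j; rewrite /L /E; move: (nat_of_ord j) => jj hj; nia.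
have indep : forall c : I -> R, \sum_(i : I) mconst n (c i) * F i = 0 -> forall i, c i = 0.
  move=> c Hc.
  pose b (a : {ffun 'I_n -> 'I_M.+1}) : mpoly R n := \sum_(j < M.+1) mconst n (c (j, a)) * s ^+ j.
  pose Q : mpoly (mpoly R n) n := \sum_a @mconst (mpoly R n) n (b a) * Xm _ n (toNat a).
  have SQ : mcoef_in S Q.
    apply: (mcoef_sum hS) => a _; apply: (mcoefM hS); last exact: (mcoef_Xm hS).
    apply: (mcoef_const hS); apply: S_sum => j _; apply: (SM hS); [exact: RinS|exact: S_exp].
  have EQ : meval Q y = 0.
    rewrite meval_sum -[RHS]Hc.
    rewrite (eq_bigr (fun a => \sum_(j < M.+1) mconst n (c (j, a)) * F (j, a))).
      by rewrite exchange_big pair_big /=; apply: eq_bigr => -[j a].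
    move=> a _; rewrite mevalM meval_mconst meval_Xm /b mulr_suml.
    apply: eq_bigr => j _; rewrite /F /= -mulrA; congr (_ * (_ * _)).
    by apply: eq_bigr => o _; rewrite toNatE.
  have Q0 := hinj SQ EQ.
  move=> [j a].
  have hb : b a = 0.
    have := congr1 (fun q => mcoefn q (toNat a)) Q0.
    rewrite /= mcoefn0 /Q mcoefn_sum (bigD1 a) //= big1 ?addr0.
      by rewrite mcoefn_constM mcoefn_Xm_eq ?mulr1.
    move=> a' ne; rewrite mcoefn_constM mcoefn_Xm_neq ?mulr0 //.
    have : ~ (forall o, a' o = a o) by move=> H; move/eqP: ne; apply; apply/ffunP.
    move/not_all_ex_not => [o ho]; exists o; split; first exact: ltn_ord.
    by rewrite !toNatE => E'; apply: ho; apply: val_inj.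
  exact: (Htr _ (fun j => c (j, a)) hb j).
pose m := #|{: I}|.
pose N := #|{: {ffun 'I_n -> 'I_L.+1}}|.
have hmN : (N < m)%N.
  rewrite /m /N card_prod !card_ffun !card_ord.
  have h1 : (L.+1 <= M.+1 * E.+1)%N by rewrite /L; nia.
  apply: leq_ltn_trans (leq_expn_base n h1) _.
  rewrite expnMn -/M mulnC ltn_pmul2r ?expn_gt0 //.
pose Mat : 'M[{fraction R}]_(m, N) :=
  \matrix_(k, j) tofrac (mcoefn (F (enum_val k)) (toNat (enum_val j))).
have rk : (0 < \rank (kermx Mat))%N.
  rewrite mxrank_ker subn_gt0; apply: leq_ltn_trans (rank_leq_col Mat) hmN.
have [i0 [j0 nz]] : exists i0 j0, kermx Mat i0 j0 != 0.
  apply: NNPP => H; move: rk; rewrite lt0n mxrank_eq0 => /eqP; apply.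
  apply/matrixP => i j; rewrite [RHS]mxE; apply/eqP; apply: NNPP => ne; apply: H.
  by exists i, j; apply/negP.
pose u := row i0 (kermx Mat).
have hu : u *m Mat = 0 by rewrite /u -row_mul mulmx_ker row0.
have u0 : u 0 j0 != 0 by rewrite /u mxE.
have [ab Hab] : exists ab : 'I_m -> R * R, forall k,
    (ab k).2 != 0 /\ u 0 k * tofrac (ab k).2 = tofrac (ab k).1.
  have H : forall k : 'I_m, exists ab : R * R, ab.2 != 0 /\ u 0 k * tofrac ab.2 = tofrac ab.1.
    by move=> k; have [a [b' [b0 E']]] := frac_rep (u 0 k); exists (a, b').
  exact: (@fin_all_exists _ (fun _ => (R * R)%type) (fun k ab => ab.2 != 0 /\ u 0 k * tofrac ab.2 = tofrac ab.1) H).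
pose w (k : 'I_m) := (ab k).1 * \prod_(k' | k' != k) (ab k').2.
pose c0 := \prod_k (ab k).2.
have c00 : c0 != 0 by apply/prodf_neq0 => k _; case: (Hab k).
have Hw : forall k, tofrac (w k) = tofrac c0 * u 0 k.
  move=> k; rewrite /w /c0 [in RHS](bigD1 k) //= !tofracM; case: (Hab k) => _ <-.
  ring.
pose G := \sum_k mconst n (w k) * F (enum_val k).
have mG : forall j : {ffun 'I_n -> 'I_L.+1}, mcoefn G (toNat j) = 0.
  move=> j; apply/eqP; rewrite -tofrac_eq0 /G mcoefn_sum rmorph_sum.
  have H0 : \sum_k u 0 k * Mat k (enum_rank j) = 0.
    have := congr1 (fun A0 : 'M_(1, N) => A0 0 (enum_rank j : 'I_N)) hu.
    by rewrite [LHS]mxE [RHS]mxE.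
  have -> : \sum_k tofrac (mcoefn (mconst n (w k) * F (enum_val k)) (toNat j))
     = tofrac c0 * \sum_k u 0 k * Mat k (enum_rank j).
    rewrite mulr_sumr; apply: eq_bigr => k _.
    by rewrite mcoefn_constM tofracM Hw [Mat _ _]mxE enum_rankK mulrA.
  by rewrite H0 mulr0.
have bG : bdeg L G.
  apply: bdeg_sum => k _; rewrite -[L]add0n; apply: bdegM; [exact: bdeg_const|exact: bF].
have G0 : G = 0.
  apply: (mcoefn_zero bG) => a ha.
  pose j : {ffun 'I_n -> 'I_L.+1} := [ffun o : 'I_n => inord (a o)].
  rewrite -(mG j); apply: mcoefn_ext => i hi.
  have -> : i = nat_of_ord (Ordinal hi) by [].
  by rewrite toNatE /j ffunE inordK // ltnS ha.
have wz : forall i : I, w (enum_rank i) = 0.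
  apply: indep; rewrite -[RHS]G0 /G (reindex (enum_val : 'I_m -> I)) /=; last first.
    by apply: onW_bij; exact: enum_val_bij.
  by apply: eq_bigr => k _; rewrite enum_valK.
have := wz (enum_val j0); rewrite enum_valK => /(congr1 (@FracField.tofrac R)).
rewrite Hw tofrac0 => /eqP; rewrite mulf_eq0 tofrac_eq0 (negbTE c00) /=.
by rewrite (negbTE u0).
Qed.

End PartB.


Unset Implicit Arguments.

Theorem lemma2p3 (R : idomainType) :
  degree_rigid R ->
  (forall (n : nat) (p : mpoly R n), Delta0 p <-> exists r : R, p = @mconst R n r)
  /\ strongly_invariant R.
Proof.
move=> hR; split; first by move=> n p; exact: (partA hR).
move=> n S hS y hsurj hinj p; split.
  exact: (SinR hR hS hsurj hinj).
by case=> r ->; exact: (RinS hR hS hsurj hinj).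
Qed.
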